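(* Let $A=(a_{i,j})$ and $B=(b_{i,j})$ be skew-symmetric $n\times n$ matrices over $\mathbb F$. Then the biderivation of $\mathbb F(x_1,\dots,x_n)$ defined by $\{x_i,x_j\}_b=a_{i,j}x_ix_j+b_{i,j}$ satisfies the Jacobi identity (i.e. $B$ is a deformation matrix of $A$) if and only if $b_{i,j}(a_{i,k}+a_{j,k})=0$ for all pairwise distinct $i,j,k\in\{1,\dots,n\}$.
   Context: $\mathbb F\in\{\mathbb R,\mathbb C\}$. A biderivation is a skew-symmetric bilinear map which is a derivation in each argument; it is determined by its values on the generators $x_i$. *)

(* Defs.v *)
From HB Require Import structures.
From mathcomp Require Import all_boot all_order all_algebra.
From mathcomp Require Import mpoly.
Set Implicit Arguments. Unset Strict Implicit. Unset Printing Implicit Defensive.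
Import Order.TTheory GRing.Theory Num.Theory.
Local Open Scope ring_scope.
Local Open Scope quotient_scope.

(* The rational function field F(x_1,...,x_n), as the fraction field of the
   polynomial ring {mpoly F[n]}; the generator x_i is indexed by i : 'I_n. *)
Definition ratfun (F : fieldType) (n : nat) := {fraction {mpoly F[n]}}.

Definition xgen (F : fieldType) (n : nat) (i : 'I_n) : ratfun F n :=
  tofrac ('X_i : {mpoly F[n]}).

(* The partial derivative d/dx_i on F(x_1,...,x_n): the unique extension of
   the partial derivative of polynomials, via the quotient rule applied to any
   representative p/q of the fraction. *)
Definition fderiv (F : fieldType) (n : nat) (i : 'I_n) (f : ratfun F n)
  : ratfun F n :=
  let r := repr f in
  let p := (\n_r : {mpoly F[n]}) in
  let q := (\d_r : {mpoly F[n]}) in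
  tofrac (mderiv i p * q - p * mderiv i q) / tofrac (q ^+ 2).

Definition bider (F : fieldType) (n : nat) (pi : 'I_n -> 'I_n -> ratfun F n)
  (f g : ratfun F n) : ratfun F n :=
  \sum_(i < n) \sum_(j < n) fderiv i f * fderiv j g * pi i j.

Definition jacobi (F : fieldType) (n : nat)
  (br : ratfun F n -> ratfun F n -> ratfun F n) : Prop :=
  forall f g h : ratfun F n,
    br f (br g h) + br g (br h f) + br h (br f g) = 0.

Definition quad_pi (F : fieldType) (n : nat) (A B : 'M[F]_n)
  (i j : 'I_n) : ratfun F n :=
  tofrac ((A i j)%:MP * 'X_i * 'X_j + (B i j)%:MP : {mpoly F[n]}).

Definition skew_mat (F : fieldType) (n : nat) (M : 'M[F]_n) : Prop :=
  M^T = - M.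

(* Main.v *)
Require Import Defs.
From HB Require Import structures.
From mathcomp Require Import all_boot all_order all_algebra.
From mathcomp Require Import mpoly.
From mathcomp Require Import ring.
Import Order.TTheory GRing.Theory Num.Theory.
Local Open Scope ring_scope.
Local Open Scope quotient_scope.
Set Implicit Arguments. Unset Strict Implicit.

Lemma frac_repr (R : idomainType) (f : {fraction R}) :
  f = tofrac (\n_(repr f)) / tofrac (\d_(repr f)).
Proof.
rewrite -{1}[f]reprK.
set r := repr f.
unlock tofrac.
change (\pi_({fraction R}) r = FracField.mul (\pi_({fraction R}) (Ratio (\n_r) 1)) (FracField.inv (\pi_({fraction R}) (Ratio (\d_r) 1)))).
rewrite -FracField.pi_inv -FracField.pi_mul.
apply/eqmodP => /=. rewrite FracField.equivfE /FracField.mulf /FracField.invf /=.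
rewrite !numden_Ratio ?oner_neq0 ?mulf_neq0 ?oner_neq0 //.
rewrite mulr1 mul1r mulrC.
all: by rewrite ?eqxx ?denom_ratioP.
Qed.

Lemma quot_aux (K : fieldType) (a b c d a' b' c' d' : K) :
  a * d = c * b -> a' * d + a * d' = c' * b + c * b' -> b != 0 -> d != 0 ->
  (c' * d - c * d') / (d * d) = (a' * b - a * b') / (b * b).
Proof.
move=> E1 E2 hb hd.
have Hc : c = a * d / b by rewrite E1 mulfK.
have Hc' : c' = (a' * d + a * d' - c * b') / b.
  by apply/(mulIf hb); rewrite divfK // E2; ring.
rewrite Hc' Hc. field. by rewrite hb hd.
Qed.

Lemma addD_aux (K : fieldType) (a a' b b' c c' d d' : K) : b != 0 -> d != 0 ->
 ((a' * d + a * d' + (c' * b + c * b')) * (b * d) - (a * d + c * b) * (b' * d + b * d')) / (b * d * (b * d)) = (a' * b - a * b') / (b * b) + (c' * d - c * d') / (d * d).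
Proof. move=> hb hd; field. by rewrite hb hd. Qed.

Lemma mulD_aux (K : fieldType) (a a' b b' c c' d d' : K) : b != 0 -> d != 0 ->
  ((a' * c + a * c') * (b * d) - a * c * (b' * d + b * d')) / (b * d * (b * d)) =
  (a' * b - a * b') / (b * b) * (c / d) + a / b * ((c' * d - c * d') / (d * d)).
Proof. move=> hb hd; field. by rewrite hb hd. Qed.

Lemma comm_aux (K : fieldType) (a ai aj aji b bi bj bji : K) :
  ((aji * b + aj * bi - (ai * bj + a * bji)) * (b * b) - (aj * b - a * bj) * (bi * b + b * bi)) / (b * b * (b * b)) =
  ((aji * b + ai * bj - (aj * bi + a * bji)) * (b * b) - (ai * b - a * bi) * (bj * b + b * bj)) / (b * b * (b * b)).
Proof. ring. Qed.

Section S.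
Variables (F : fieldType) (n : nat).
Local Notation P := {mpoly F[n]}.
Local Notation K := (ratfun F n).
Local Notation tf := (@tofrac P).

Lemma fderiv_frac (i : 'I_n) (p q : P) : q != 0 ->
  fderiv i (tf p / tf q) = tf (p^`M(i) * q - p * q^`M(i)) / tf (q ^+ 2).
Proof.
move=> hq.
rewrite /fderiv.
set f := tf p / tf q.
have e := @frac_repr _ f.
set N := \n_(repr f) in e *.
set D := \d_(repr f) in e *.
have hD : D != 0 by apply: denom_ratioP.
have hb : tf q != 0 by rewrite tofrac_eq0.
have hd : tf D != 0 by rewrite tofrac_eq0.
have H1 : p * D = N * q.
  apply/eqP; rewrite -tofrac_eq !rmorphM /=; apply/eqP.
  have ef : tf p = f * tf q by rewrite /f divfK; [reflexivity| exact hb].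
  rewrite ef e mulrAC divfK; [reflexivity| exact hd].
have H2 := congr1 (mderiv i) H1.
rewrite !mderivM in H2.
have H1' := congr1 tf H1. have H2' := congr1 tf H2.
rewrite !rmorphD !rmorphM /= in H1' H2'.
rewrite !rmorphB !rmorphM /=.
apply: quot_aux H1' H2' hb hd.
Qed.

Lemma mderivXU (k b : 'I_n) : mderiv k ('X_b : P) = (b == k)%:R.
Proof.
rewrite mderivX mnm1E; case: eqP => [->|_].
  have -> : (U_(k) - U_(k))%MM = 0%MM by apply/mnmP => j; rewrite mnmBE mnm0E subnn.
  by rewrite mpolyX0 scale1r.
by rewrite scale0r.
Qed.

Lemma fderiv_tofrac (i : 'I_n) (p : P) : fderiv i (tf p) = tf (p^`M(i)).
Proof.
have -> : tf p = tf p / tf 1 by rewrite rmorph1 divr1.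
rewrite fderiv_frac; last exact: oner_neq0.
have -> : (1 : P)^`M(i) = 0 by rewrite -mpolyC1 mderivC.
rewrite expr1n rmorph1 divr1 mulr1 mulr0 subr0.
reflexivity.
Qed.

Lemma fderivD_frac (i : 'I_n) (a b c d : P) : b != 0 -> d != 0 ->
  fderiv i (tf a / tf b + tf c / tf d) = fderiv i (tf a / tf b) + fderiv i (tf c / tf d).
Proof.
move=> hb hd.
have hb' : tf b != 0 by rewrite tofrac_eq0.
have hd' : tf d != 0 by rewrite tofrac_eq0.
have -> : tf a / tf b + tf c / tf d = tf (a * d + c * b) / tf (b * d).
  rewrite rmorphD !rmorphM /= addf_div; [reflexivity|exact hb'|exact hd'].
rewrite !fderiv_frac; [|exact hd|exact hb|exact (mulf_neq0 hb hd)].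
rewrite mderivD !mderivM.
rewrite !(rmorphB, rmorphD, rmorphM) /=.
exact: addD_aux hb' hd'.
Qed.

Lemma fderivM_frac (i : 'I_n) (a b c d : P) : b != 0 -> d != 0 ->
  fderiv i (tf a / tf b * (tf c / tf d)) =
  fderiv i (tf a / tf b) * (tf c / tf d) + tf a / tf b * fderiv i (tf c / tf d).
Proof.
move=> hb hd.
have hb' : tf b != 0 by rewrite tofrac_eq0.
have hd' : tf d != 0 by rewrite tofrac_eq0.
have -> : tf a / tf b * (tf c / tf d) = tf (a * c) / tf (b * d).
  rewrite !rmorphM /= mulf_div; reflexivity.
rewrite !fderiv_frac; [|exact hd|exact hb|exact (mulf_neq0 hb hd)].
rewrite !mderivM.
rewrite !(rmorphB, rmorphD, rmorphM) /=.
exact: mulD_aux hb' hd'.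
Qed.

Lemma fderivC_frac (i j : 'I_n) (a b : P) : b != 0 ->
  fderiv i (fderiv j (tf a / tf b)) = fderiv j (fderiv i (tf a / tf b)).
Proof.
move=> hb.
have hb' : tf b != 0 by rewrite tofrac_eq0.
have hb2 : b ^+ 2 != 0 by rewrite expf_neq0.
rewrite !fderiv_frac; [|exact hb2|exact hb|exact hb2|exact hb].
rewrite !expr2 !(mderivB, mderivD, mderivM) (mderiv_comm i j a) (mderiv_comm i j b).
rewrite !(rmorphB, rmorphD, rmorphM) /=.
exact: comm_aux.
Qed.

Lemma fderivD (i : 'I_n) (f g : K) : fderiv i (f + g) = fderiv i f + fderiv i g.
Proof.
rewrite (@frac_repr _ f) (@frac_repr _ g).
exact: fderivD_frac (denom_ratioP _) (denom_ratioP _).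
Qed.

Lemma fderivM (i : 'I_n) (f g : K) :
  fderiv i (f * g) = fderiv i f * g + f * fderiv i g.
Proof.
rewrite (@frac_repr _ f) (@frac_repr _ g).
exact: fderivM_frac (denom_ratioP _) (denom_ratioP _).
Qed.

Lemma fderivC (i j : 'I_n) (f : K) : fderiv i (fderiv j f) = fderiv j (fderiv i f).
Proof.
rewrite (@frac_repr _ f).
exact: fderivC_frac (denom_ratioP _).
Qed.

Lemma fderiv0 (i : 'I_n) : fderiv i (0 : K) = 0.
Proof.
have -> : (0 : K) = tf 0 by rewrite rmorph0.
rewrite fderiv_tofrac mderiv0 rmorph0; reflexivity.
Qed.

Lemma fderiv_xgen (k i : 'I_n) : fderiv k (xgen F i) = (i == k)%:R.
Proof. rewrite /xgen fderiv_tofrac mderivXU rmorph_nat; reflexivity. Qed.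

Lemma fderiv_phi (k : 'I_n) (c : F) : fderiv k (tf c%:MP) = 0.
Proof. rewrite fderiv_tofrac mderivC rmorph0; reflexivity. Qed.
End S.

Section Gen.
Variables (K : comRingType) (n : nat) (D : 'I_n -> K -> K).
Hypothesis HDD : forall i x y, D i (x + y) = D i x + D i y.
Hypothesis HD0 : forall i, D i 0 = 0.
Hypothesis HDM : forall i x y, D i (x * y) = D i x * y + x * D i y.
Hypothesis HDC : forall i j x, D i (D j x) = D j (D i x).
Variable pi : 'I_n -> 'I_n -> K.
Hypothesis Hskew : forall i j, pi j i = - pi i j.

Definition br (f g : K) := \sum_(i < n) \sum_(j < n) D i f * D j g * pi i j.

Lemma D_sum k (I : Type) (r : seq I) (P : pred I) (G : I -> K) :
  D k (\sum_(x <- r | P x) G x) = \sum_(x <- r | P x) D k (G x).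
Proof. exact: (big_morph (D k) (HDD k) (HD0 k)). Qed.

Lemma sum4E (G : 'I_n -> 'I_n -> 'I_n -> 'I_n -> K) :
  \sum_(a < n) \sum_(b < n) \sum_(c < n) \sum_(d < n) G a b c d =
  \sum_(p : 'I_n * 'I_n * 'I_n * 'I_n) G p.1.1.1 p.1.1.2 p.1.2 p.2.
Proof.
by rewrite pair_bigA pair_bigA pair_bigA.
Qed.


Definition T1 f g h := \sum_(l < n) \sum_(k < n) \sum_(i < n) \sum_(j < n)
  D l f * D k (D i g) * D j h * pi i j * pi l k.
Definition T2 f g h := \sum_(l < n) \sum_(k < n) \sum_(i < n) \sum_(j < n)
  D l f * D i g * D k (D j h) * pi i j * pi l k.
Definition T3 f g h := \sum_(l < n) \sum_(k < n) \sum_(i < n) \sum_(j < n)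
  D l f * D i g * D j h * D k (pi i j) * pi l k.

Lemma br2 f g h : br f (br g h) = T1 f g h + T2 f g h + T3 f g h.
Proof.
rewrite /br /T1 /T2 /T3 -!big_split; apply: eq_bigr => l _.
rewrite -!big_split; apply: eq_bigr => k _.
rewrite D_sum mulr_sumr mulr_suml -!big_split; apply: eq_bigr => i _.
rewrite D_sum mulr_sumr mulr_suml -!big_split; apply: eq_bigr => j _.
rewrite !HDM /=. ring.
Qed.

Local Notation I4 := ('I_n * 'I_n * 'I_n * 'I_n)%type.

Lemma T12 f g h : T1 f g h + T2 h f g = 0.
Proof.
rewrite /T1 /T2 !sum4E.
pose tau (p : I4) : I4 := (p.1.2, p.2, p.1.1.2, p.1.1.1).
have tauI : injective tau.
  by move=> [[[a b] c] d] [[[a' b'] c'] d'] /= [-> -> -> ->].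
rewrite (reindex_inj tauI) -big_split big1 // => [[[[a b] c] d]] _ /=.
rewrite (HDC d b) (Hskew a b). ring.
Qed.

Definition J a b c := \sum_(k < n)
  (pi a k * D k (pi b c) + pi b k * D k (pi c a) + pi c k * D k (pi a b)).

Lemma T3cyc f g h : T3 f g h + T3 g h f + T3 h f g =
  \sum_(a < n) D a f * (\sum_(b < n) D b g * (\sum_(c < n) D c h * J a b c)).
Proof.
have -> : \sum_(a < n) D a f * (\sum_(b < n) D b g * (\sum_(c < n) D c h * J a b c))
  = \sum_(a < n) \sum_(b < n) \sum_(c < n) \sum_(k < n)
     (D a f * D b g * D c h * (pi a k * D k (pi b c))
     + D a f * D b g * D c h * (pi b k * D k (pi c a))
     + D a f * D b g * D c h * (pi c k * D k (pi a b))).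
  apply: eq_bigr => a _; rewrite mulr_sumr; apply: eq_bigr => b _.
  rewrite mulr_sumr mulr_sumr; apply: eq_bigr => c _.
  rewrite /J !mulr_sumr; apply: eq_bigr => k _. ring.
rewrite [in RHS]sum4E !big_split /= /T3 !sum4E.
pose t1 (p : I4) : I4 := (p.1.1.1, p.2, p.1.1.2, p.1.2).
pose t2 (p : I4) : I4 := (p.1.1.2, p.2, p.1.2, p.1.1.1).
pose t3 (p : I4) : I4 := (p.1.2, p.2, p.1.1.1, p.1.1.2).
have t1I : injective t1 by move=> [[[a b] c] d] [[[a' b'] c'] d'] /= [-> -> -> ->].
have t2I : injective t2 by move=> [[[a b] c] d] [[[a' b'] c'] d'] /= [-> -> -> ->].
have t3I : injective t3 by move=> [[[a b] c] d] [[[a' b'] c'] d'] /= [-> -> -> ->].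
congr (_ + _ + _).
- rewrite [LHS](reindex_inj t1I); apply: eq_bigr => [[[[a b] c] k]] _ /=; ring.
- rewrite [LHS](reindex_inj t2I); apply: eq_bigr => [[[[a b] c] k]] _ /=; ring.
- rewrite [LHS](reindex_inj t3I); apply: eq_bigr => [[[[a b] c] k]] _ /=; ring.
Qed.

Lemma jac_gen f g h : br f (br g h) + br g (br h f) + br h (br f g) =
  \sum_(a < n) D a f * (\sum_(b < n) D b g * (\sum_(c < n) D c h * J a b c)).
Proof.
rewrite -T3cyc !br2.
have E1 := T12 f g h. have E2 := T12 g h f. have E3 := T12 h f g.
move: E1 E2 E3.
move: (T1 f g h) (T1 g h f) (T1 h f g) (T2 f g h) (T2 g h f) (T2 h f g) => a b c d e x.
move=> E1 E2 E3.
have -> : a = - x by apply/eqP; rewrite -subr_eq0 opprK E1.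
have -> : b = - d by apply/eqP; rewrite -subr_eq0 opprK E2.
have -> : c = - e by apply/eqP; rewrite -subr_eq0 opprK E3.
ring.
Qed.

End Gen.

Lemma sum_delta (K : comRingType) (n : nat) (b : 'I_n) (G : 'I_n -> K) :
  \sum_(k < n) (b == k)%:R * G k = G b.
Proof.
rewrite (bigD1 b) //= eqxx mul1r big1 ?addr0 // => k hk.
by rewrite eq_sym (negbTE hk) mul0r.
Qed.

Lemma Jsum (K : comRingType) (n : nat) (G : 'I_n -> K) al u v (b c : 'I_n) :
  \sum_(k < n) G k * (al * ((b == k)%:R * u + v * (c == k)%:R)) = al * (G b * u + G c * v).
Proof.
have -> : \sum_(k < n) G k * (al * ((b == k)%:R * u + v * (c == k)%:R)) =
  \sum_(k < n) ((b == k)%:R * (al * G k * u) + (c == k)%:R * (al * G k * v)).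
  by apply: eq_bigr => k _; ring.
rewrite big_split /= (sum_delta b (fun k => al * G k * u)) (sum_delta c (fun k => al * G k * v)).
ring.
Qed.

Lemma Jgen_aux (K : comRingType) (xa xb xc Aab Aba Abc Acb Aac Aca Bab Bba Bbc Bcb Bac Bca : K) :
 Aba = -Aab -> Acb = -Abc -> Aca = -Aac -> Bba = -Bab -> Bcb = -Bbc -> Bca = -Bac ->
 Abc * ((Aab*xa*xb + Bab) * xc + (Aac*xa*xc + Bac) * xb) + Aca * ((Abc*xb*xc + Bbc) * xa + (Aba*xb*xa + Bba) * xc) + Aab * ((Aca*xc*xa + Bca) * xb + (Acb*xc*xb + Bcb) * xa)
 = Bab*(Aac+Abc)*xc + Bca*(Acb+Aab)*xb + Bbc*(Aba+Aca)*xa.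
Proof. move=> -> -> -> -> -> ->; ring. Qed.

Lemma skew_aux (K : comRingType) (a b u v : K) : -a * v * u + -b = -(a * u * v + b).
Proof. ring. Qed.

Lemma dq_aux (K : comRingType) (a u v d1 d2 z : K) : z = 0 ->
  (z * u + a * d1) * v + a * u * d2 + z = a * (d1 * v + u * d2).
Proof. move=> ->; ring. Qed.

Lemma skewE (F : fieldType) (n : nat) (M : 'M[F]_n) : skew_mat M -> forall i j, M j i = - M i j.
Proof. rewrite /skew_mat => h i j; have := congr1 (fun N : 'M[F]_n => N i j) h; by rewrite !mxE. Qed.

Lemma skew_diag (F : numFieldType) (n : nat) (M : 'M[F]_n) : skew_mat M -> forall i, M i i = 0.
Proof. move=> h i; apply/eqP; rewrite -eqNr -{1}(skewE h i i) eqxx //. Qed.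

Lemma sum3_zero (K : comRingType) (n : nat) (u v w : 'I_n -> K) (G : 'I_n -> 'I_n -> 'I_n -> K) :
  (forall a b c, G a b c = 0) ->
  \sum_(a < n) u a * (\sum_(b < n) v b * (\sum_(c < n) w c * G a b c)) = 0.
Proof.
move=> H; apply: big1 => a _; rewrite big1 ?mulr0 // => b _.
by rewrite big1 ?mulr0 // => c _; rewrite H mulr0.
Qed.

Lemma sum3_delta (K : comRingType) (n : nat) (u v w : 'I_n -> K) (G : 'I_n -> 'I_n -> 'I_n -> K)
  (i j k : 'I_n) : (forall a, u a = (i == a)%:R) -> (forall a, v a = (j == a)%:R) ->
  (forall a, w a = (k == a)%:R) ->
  \sum_(a < n) u a * (\sum_(b < n) v b * (\sum_(c < n) w c * G a b c)) = G i j k.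
Proof.
move=> hu hv hw.
under eq_bigr => a _ do (rewrite hu; under eq_bigr => b _ do (rewrite hv;
  under eq_bigr => c _ do rewrite hw)).
by rewrite sum_delta sum_delta sum_delta.
Qed.

Section Q.
Variables (F : numFieldType) (n : nat) (A B : 'M[F]_n).
Hypothesis skA : skew_mat A.
Hypothesis skB : skew_mat B.
Local Notation K := (ratfun F n).
Local Notation tf := (@tofrac {mpoly F[n]}).
Local Notation phi c := (tf (c%:MP)).
Local Notation x i := (xgen F i).

Lemma quad_piE (i j : 'I_n) : quad_pi A B i j = phi (A i j) * x i * x j + phi (B i j).
Proof. rewrite /quad_pi rmorphD !rmorphM; reflexivity. Qed.

Lemma quad_skew (i j : 'I_n) : quad_pi A B j i = - quad_pi A B i j.
Proof.
rewrite !quad_piE (skewE skA i j) (skewE skB i j) !(raddfN, rmorphN) /=.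
exact: skew_aux.
Qed.

Lemma phiN (M : 'M[F]_n) : skew_mat M -> forall i j : 'I_n, phi (M j i) = - phi (M i j).
Proof. move=> h i j; rewrite (skewE h i j) !raddfN; reflexivity. Qed.

Lemma fderiv_quad (k i j : 'I_n) : fderiv k (quad_pi A B i j) =
  phi (A i j) * ((i == k)%:R * x j + x i * (j == k)%:R).
Proof.
rewrite quad_piE fderivD !fderivM !fderiv_phi !fderiv_xgen.
exact: dq_aux.
Qed.


Lemma J_quad (a b c : 'I_n) : J (@fderiv F n) (quad_pi A B) a b c =
  phi (A b c) * (quad_pi A B a b * x c + quad_pi A B a c * x b) +
  phi (A c a) * (quad_pi A B b c * x a + quad_pi A B b a * x c) +
  phi (A a b) * (quad_pi A B c a * x b + quad_pi A B c b * x a).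
Proof.
rewrite /J. under eq_bigr => k _ do rewrite !fderiv_quad.
rewrite !big_split /=.
rewrite (Jsum (fun k => quad_pi A B a k)) (Jsum (fun k => quad_pi A B b k)) (Jsum (fun k => quad_pi A B c k)).
reflexivity.
Qed.

Lemma phiL (i j k : 'I_n) :
  phi (B i j) * (phi (A i k) + phi (A j k)) = phi (B i j * (A i k + A j k)).
Proof. rewrite !(rmorphM, rmorphD); reflexivity. Qed.

Lemma J_LC (a b c : 'I_n) : J (@fderiv F n) (quad_pi A B) a b c =
  phi (B a b * (A a c + A b c)) * x c + phi (B c a * (A c b + A a b)) * x b
  + phi (B b c * (A b a + A c a)) * x a.
Proof.
rewrite J_quad !quad_piE.
rewrite (@Jgen_aux _ _ _ _ _ _ _ _ _ _ _ _ _ _ _ _ (phiN skA a b) (phiN skA b c) (phiN skA a c) (phiN skB a b) (phiN skB b c) (phiN skB a c)).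
rewrite -!phiL; reflexivity.
Qed.

Lemma Jz (hc : forall i j k : 'I_n, i != j -> j != k -> i != k ->
     B i j * (A i k + A j k) = 0) (a b c : 'I_n) :
  J (@fderiv F n) (quad_pi A B) a b c = 0.
Proof.
rewrite J_LC.
case: (eqVneq a b) => [<-|hab].
  rewrite (skew_diag skB a) (skew_diag skA a) (skewE skB a c).
  rewrite !(mul0r, addr0, add0r, mulNr, raddfN, raddf0, mulr0).
  exact: addNr.
case: (eqVneq b c) => [<-|hbc].
  rewrite (skew_diag skB b) (skew_diag skA b) (skewE skB a b).
  rewrite !(mul0r, addr0, add0r, mulNr, raddfN, raddf0, mulr0).
  exact: subrr.
case: (eqVneq a c) => [<-|hac].
  rewrite (skew_diag skB a) (skew_diag skA a) (skewE skB a b).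
  rewrite !(mul0r, addr0, add0r, mulNr, raddfN, raddf0, mulr0).
  exact: subrr.
have hca : c != a by rewrite eq_sym.
have hba : b != a by rewrite eq_sym.
have hcb : c != b by rewrite eq_sym.
rewrite (hc a b c hab hbc hac) (hc c a b hca hab hcb) (hc b c a hbc hca hba).
rewrite !raddf0 !mul0r !addr0; reflexivity.
Qed.

Lemma main_lemma : jacobi (bider (quad_pi A B)) <->
  (forall i j k : 'I_n, i != j -> j != k -> i != k ->
     B i j * (A i k + A j k) = 0).
Proof.
have Hbr : bider (quad_pi A B) = br (@fderiv F n) (quad_pi A B) by reflexivity.
rewrite /jacobi Hbr.
have HJ := jac_gen (@fderivD F n) (@fderiv0 F n) (@fderivM F n) (@fderivC F n) quad_skew.
split.
- move=> hJ i j k hij hjk hik.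
  have := hJ (x i) (x j) (x k).
  rewrite HJ (sum3_delta _ (fun a => @fderiv_xgen F n a i) (fun a => @fderiv_xgen F n a j) (fun a => @fderiv_xgen F n a k)) J_LC.
  have -> : phi (B i j * (A i k + A j k)) * x k + phi (B k i * (A k j + A i j)) * x j
     + phi (B j k * (A j i + A k i)) * x i =
     tf ((B i j * (A i k + A j k))%:MP * 'X_k + (B k i * (A k j + A i j))%:MP * 'X_j
         + (B j k * (A j i + A k i))%:MP * 'X_i).
    rewrite !(rmorphD, rmorphM); reflexivity.
  move/eqP; rewrite tofrac_eq0 => /eqP/(congr1 (mcoeff U_(k))).
  rewrite !mcoeffD !mcoeffCM !mcoeffXU mcoeff0 eqxx (negbTE hjk) (negbTE hik).
  by rewrite !mulr0 !addr0 mulr1.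
- move=> hc f g h.
  rewrite HJ; apply: sum3_zero => a b c; exact: Jz.
Qed.

End Q.

Unset Implicit Arguments.

Theorem proposition5p2 (F : numFieldType) (n : nat) (A B : 'M[F]_n)
  (skewA : skew_mat A) (skewB : skew_mat B) :
  jacobi (bider (quad_pi A B)) <->
  (forall i j k : 'I_n, i != j -> j != k -> i != k ->
     B i j * (A i k + A j k) = 0).
Proof. exact: main_lemma skewA skewB. Qed.
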